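(* Let $x\in V$ be a non-leaf vertex of $T$. If $y$ is a vertex lying strictly below $r(x)$ on the path $\pi(s,u_{H_x})$, then $s$ is connected to $H_x$ in $G\setminus\{x,y\}$.
   Context: $G=(V,E)$ is a connected graph with no cut vertex, $T$ a BFS tree rooted at $s$, $\pi(u,v)$ the $T$-path, $T_x$ the subtree at $x$, $V_x=V(T_x)\setminus\{x\}$. $x_h$ is the heavy child of $x$ (child with largest subtree, ties broken consistently). $\mathcal{C}_x$ is the set of connected components of $G[V_x]$, and $H_x$ is the one containing $x_h$. A fixed edge $(u_{H_x},v_{H_x})\in E$ with $v_{H_x}\in H_x$ and $u_{H_x}\notin V(T_x)$ is chosen. $R(x)=\{v\in V\setminus V(T_x): v\text{ has a neighbour in }H_x\}$ and $r(x)$ is the lowest common ancestor in $T$ of all vertices of $R(x)$ (so $r(x)$ lies on $\pi(s,u_{H_x})$). *)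

(* Defs.v *)
From mathcomp Require Import all_boot.
Set Implicit Arguments. Unset Strict Implicit. Unset Printing Implicit Defensive.

Definition induced (V : finType) (e : rel V) (A : {pred V}) : rel V :=
  fun a b => [&& a \in A, b \in A & e a b].

Definition simple_graph (V : finType) (e : rel V) : Prop :=
  symmetric e /\ irreflexive e.

Definition connected_graph (V : finType) (e : rel V) : Prop :=
  forall a b, connect e a b.

Definition no_cut_vertex (V : finType) (e : rel V) : Prop :=
  forall z a b, a != z -> b != z -> connect (induced e (predC1 z)) a b.

Definition is_dist (V : finType) (e : rel V) (s v : V) (n : nat) : Prop :=
  (exists2 p, path e s p & (last s p == v) && (size p == n)) /\
  (forall p, path e s p -> last s p = v -> n <= size p).

(* T, given by its parent function par, is a BFS (shortest-path) spanning tree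
   of G rooted at s: par s = s, every non-root v is joined to its parent by an
   edge of G, and the parent is one step closer to s in G. *)
Definition bfs_tree (V : finType) (e : rel V) (s : V) (par : V -> V) : Prop :=
  par s = s /\
  forall v, v != s ->
    e (par v) v /\ (forall n, is_dist e s v n.+1 -> is_dist e s (par v) n).

(* a is an ancestor of v in T (a = v allowed), i.e. a lies on pi(s, v). *)
Definition ancestor (V : finType) (par : V -> V) (a v : V) : bool :=
  fconnect par v a.

Definition children (V : finType) (par : V -> V) (x : V) : {set V} :=
  [set c | (par c == x) && (c != x)].

Definition subtree (V : finType) (par : V -> V) (x : V) : {set V} :=
  [set v | ancestor par x v].

Definition Vx (V : finType) (par : V -> V) (x : V) : {set V} :=
  subtree par x :\ x.

Definition heavy_child (V : finType) (par : V -> V) (x h : V) : Prop :=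
  h \in children par x /\
  forall c, c \in children par x -> #|subtree par c| <= #|subtree par h|.

Definition Hx (V : finType) (e : rel V) (par : V -> V) (x xh : V) : {set V} :=
  [set v | (v \in Vx par x) && connect (induced e (mem (Vx par x))) xh v].

Definition Rx (V : finType) (e : rel V) (par : V -> V) (x xh : V) : {set V} :=
  [set v | (v \notin subtree par x) && [exists w in Hx e par x xh, e v w]].

Definition is_lca (V : finType) (par : V -> V) (R : {set V}) (r : V) : Prop :=
  (forall v, v \in R -> ancestor par r v) /\
  (forall a, (forall v, v \in R -> ancestor par a v) -> ancestor par a r).

(* Main.v *)
Require Import Defs.
From mathcomp Require Import all_boot.

Set Implicit Arguments. Unset Strict Implicit. Unset Printing Implicit Defensive.

Lemma dist_ex (V : finType) (e : rel V) (s v : V) :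
  connect e s v -> exists n, is_dist e s v n.
Proof.
move=> /connectP [p pth lst].
pose P n := [exists t : n.-tuple V, path e s t && (last s t == v)].
have Pp : exists n, P n.
  exists (size p); apply/existsP; exists (in_tuple p) => /=.
  by rewrite pth lst eqxx.
case: (ex_minnP Pp) => m /existsP [t /andP [pt lt]] mmin.
exists m; split.
  by exists t => //; rewrite lt size_tuple eqxx.
move=> q pq lq; apply: mmin; apply/existsP; exists (in_tuple q) => /=.
by rewrite pq lq eqxx.
Qed.

Lemma anc_root (V : finType) (e : rel V) (s : V) (par : V -> V) :
  irreflexive e -> connected_graph e -> bfs_tree e s par ->
  forall v, ancestor par s v.
Proof.
move=> irr conn [ps hb] v.
have [n dn] := dist_ex (conn s v).
elim: n v dn => [|n IH] v [[p pp /andP [lp sp]] mn].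
  by move: sp lp; case: p pp => //= _ _ /eqP ->; rewrite /ancestor connect0.
have vs : v != s.
  apply/eqP => vs; subst v.
  by have := mn [::] isT erefl.
have [_ hd] := hb v vs.
have := IH _ (hd n (conj (ex_intro2 _ _ p pp (introT andP (conj lp sp))) mn)).
rewrite /ancestor => h.
exact: connect_trans (fconnect1 par v) h.
Qed.

Lemma anc_antisym (V : finType) (s : V) (par : V -> V) :
  (forall v, ancestor par s v) -> par s = s ->
  forall a b, ancestor par a b -> ancestor par b a -> a = b.
Proof.
move=> root ps a b hab hba.
have ea := iter_findex hab.
have eb := iter_findex hba.
set k := findex par b a in ea.
set j := findex par a b in eb.
have es := iter_findex (root b).
set m := findex par b s in es.
have cyc : forall t, iter (t * (j + k)) par b = b.
  elim=> [|t IH] //=.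
  by rewrite mulSn iterD IH iterD ea eb.
case jk: (j + k) => [|l].
  have k0 : k = 0 by apply/eqP; move: jk => /eqP; rewrite addn_eq0 => /andP [_ ->].
  by rewrite -ea k0.
have bs : b = s.
  rewrite -(cyc m) jk.
  have -> : m * l.+1 = (m * l.+1 - m) + m.
    by rewrite subnK // leq_pmulr.
  by rewrite iterD es iter_fix.
by rewrite -ea bs iter_fix.
Qed.

Theorem mainTheorem12 (V : finType) (e : rel V) (s : V) (par : V -> V)
    (x xh uH vH r y : V) :
  simple_graph e -> connected_graph e -> no_cut_vertex e ->
  bfs_tree e s par ->
  (* x is not a leaf of T, and xh is its heavy child *)
  children par x != set0 ->
  heavy_child par x xh ->
  (* the fixed edge (u_{H_x}, v_{H_x}) *)
  e uH vH -> vH \in Hx e par x xh -> uH \notin subtree par x ->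
  (* r = r(x) *)
  is_lca par (Rx e par x xh) r ->
  (* y lies strictly below r(x) on pi(s, u_{H_x}) *)
  ancestor par y uH -> ancestor par r y -> y != r ->
  (* s is connected to H_x in G \ {x, y} *)
  exists2 w, w \in Hx e par x xh &
    connect (induced e [predC pred2 x y]) s w.
Proof.
move=> [sym irr] conn _ bfs _ _ _ _ uHn [lca1 lca2] yu ry yr.
have root := anc_root irr conn bfs.
have [ps hb] := bfs.
have [v vR nyv] : exists2 v, v \in Rx e par x xh & ~~ ancestor par y v.
  case: (boolP [exists v in Rx e par x xh, ~~ ancestor par y v]).
    by move=> /existsP [v /andP [h1 h2]]; exists v.
  move=> /existsPn hall; exfalso.
  have : ancestor par y r.
    apply: lca2 => w wR; move: (hall w); rewrite wR /=; by move/negbNE.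
  move=> yr'.
  by move: yr; rewrite (anc_antisym root ps yr' ry) eqxx.
move: vR; rewrite inE => /andP [nxv /existsP [w /andP [wH evw]]].
have nxy : ~~ ancestor par x y.
  apply/negP => xy; move: uHn; rewrite inE => /negP; apply.
  exact: connect_trans yu xy.
have wA : w \in [predC pred2 x y].
  move: wH; rewrite !inE => /andP [/andP [wx wsub] _].
  rewrite (negbTE wx) /=; apply/eqP => wy; subst w.
  by rewrite wsub in nxy.
have ancA : forall a, ancestor par a v -> a \in [predC pred2 x y].
  move=> a av; rewrite !inE; apply/negP => /orP [] /eqP ea; subst a.
    by move: nxv; rewrite inE av.
  by move: nyv; rewrite av.
have up : forall k, connect (induced e [predC pred2 x y]) (iter k par v) v.
  elim=> [|k IH] /=; first exact: connect0.
  case: (eqVneq (iter k par v) s) => [eks|nks].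
    by rewrite eks ps -eks.
  apply: connect_trans IH; apply: connect1.
  rewrite /induced (proj1 (hb _ nks)) andbT.
  rewrite !ancA //.
    exact: fconnect_iter.
  exact: (fconnect_iter par k.+1 v).
exists w => //.
have := up (findex par v s); rewrite iter_findex; last exact: root.
move=> h; apply: connect_trans h _; apply: connect1.
by rewrite /induced evw wA (ancA v (connect0 _ v)).
Qed.
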